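(* Assume $f$ is backward contracting, and for each $\delta>0$ let $W_\delta$ be the pull-back of $\tilde B(2\delta)$ by $f^{n(\delta)-1}$ containing $c$. Then for every sufficiently small $\delta>0$ we have $R(\delta)\ge\delta/\mathrm{diam}(W_\delta)$.
   Context: Standing setting: $d\ge2$, $c\in\mathbb{C}$, $f(z)=z^d+c$, critical point $0$ non-periodic and recurrent, critical value $c$. $\tilde B(\delta)=B(0,\delta^{1/d})$; a pull-back of $V$ by $f^n$ is a connected component of $f^{-n}(V)$. $R(\delta)=\inf\{\delta/\mathrm{diam}(U): U$ a pull-back of $\tilde B(\delta)$ by some $f^n$, $n\ge0$, with $c\in U\}$. $r(\delta)=\sup\{r>0:$ every pull-back $W$ of $\tilde B(\delta r)$ with $\mathrm{dist}(W,c)\le\delta$ has $\mathrm{diam}(W)<\delta\}$; $f$ is backward contracting if $r(\delta)\to\infty$ as $\delta\to0$. $n(\delta)$ is the minimal integer $n\ge1$ with $f^n(0)\in\tilde B(\delta)$. *)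

(* Defs.v *)
From Stdlib Require Import Reals Lra Classical ClassicalEpsilon.
Open Scope R_scope.

Definition Cx : Type := (R * R)%type.
Definition C0 : Cx := (0, 0).
Definition Cadd (z w : Cx) : Cx := (fst z + fst w, snd z + snd w).
Definition Cmul (z w : Cx) : Cx :=
  (fst z * fst w - snd z * snd w, fst z * snd w + snd z * fst w).
Fixpoint Cpow (z : Cx) (n : nat) : Cx :=
  match n with O => (1, 0) | S m => Cmul z (Cpow z m) end.
Definition Cdist (z w : Cx) : R :=
  sqrt ((fst z - fst w) ^ 2 + (snd z - snd w) ^ 2).

Definition fpoly (d : nat) (c : Cx) (z : Cx) : Cx := Cadd (Cpow z d) c.
Fixpoint iter (n : nat) (g : Cx -> Cx) (z : Cx) : Cx :=
  match n with O => z | S m => g (iter m g z) end.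

Definition ball (a : Cx) (r : R) : Cx -> Prop := fun z => Cdist z a < r.
Definition Btilde (d : nat) (delta : R) : Cx -> Prop :=
  ball C0 (Rpower delta (/ INR d)).

Definition open_set (U : Cx -> Prop) : Prop :=
  forall z, U z -> exists e, 0 < e /\ forall w, Cdist w z < e -> U w.

Definition connected (S : Cx -> Prop) : Prop :=
  ~ (exists U V, open_set U /\ open_set V /\
       (forall z, S z -> U z \/ V z) /\
       (exists z, S z /\ U z) /\ (exists z, S z /\ V z) /\
       (forall z, S z -> U z -> V z -> False)).

(** connected component of A containing x (empty if x is not in A) *)
Definition component (A : Cx -> Prop) (x : Cx) : Cx -> Prop :=
  fun z => exists S, connected S /\ (forall w, S w -> A w) /\ S x /\ S z.

Definition preimage (g : Cx -> Cx) (V : Cx -> Prop) : Cx -> Prop :=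
  fun z => V (g z).

Definition pullback (d : nat) (c : Cx) (V : Cx -> Prop) (n : nat)
  (U : Cx -> Prop) : Prop :=
  exists x, preimage (iter n (fpoly d c)) V x /\
    forall z, U z <-> component (preimage (iter n (fpoly d c)) V) x z.

Definition is_glb (S : R -> Prop) (m : R) : Prop :=
  (forall x, S x -> m <= x) /\ (forall b, (forall x, S x -> b <= x) -> b <= m).

Definition diam (U : Cx -> Prop) : R :=
  epsilon (inhabits 0)
    (is_lub (fun r => exists z w, U z /\ U w /\ r = Cdist z w)).

Definition dist_to (U : Cx -> Prop) (a : Cx) : R :=
  epsilon (inhabits 0) (is_glb (fun r => exists z, U z /\ r = Cdist z a)).

Definition Rdelta (d : nat) (c : Cx) (delta : R) : R :=
  epsilon (inhabits 0)
    (is_glb (fun x => exists n U, pullback d c (Btilde d delta) n U /\ U c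
                                  /\ x = delta / diam U)).

(** r is admissible in the definition of r(delta) (r(delta) is the sup of such r) *)
Definition r_adm (d : nat) (c : Cx) (delta r : R) : Prop :=
  0 < r /\ forall n W, pullback d c (Btilde d (delta * r)) n W ->
     dist_to W c <= delta -> diam W < delta.

(** backward contracting: r(delta) -> infinity as delta -> 0, i.e.
    for each M, for delta small, sup of admissible r exceeds M *)
Definition backward_contracting (d : nat) (c : Cx) : Prop :=
  forall M, exists delta0, 0 < delta0 /\
    forall delta, 0 < delta < delta0 -> exists r, r_adm d c delta r /\ M < r.

Definition is_n_delta (d : nat) (c : Cx) (delta : R) (N : nat) : Prop :=
  (1 <= N)%nat /\ Btilde d delta (iter N (fpoly d c) C0) /\
  forall m, (1 <= m < N)%nat -> ~ Btilde d delta (iter m (fpoly d c) C0).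

(* Main.v *)
Require Import Defs.
From Stdlib Require Import Reals.
Open Scope R_scope.
From Stdlib Require Import Lra Lia Classical ClassicalEpsilon.
From Coquelicot Require Complex.

Lemma Cdist_mod z w : Cdist z w = Complex.Cmod (Complex.Cminus z w).
Proof. reflexivity. Qed.

Lemma Cdist_nonneg z w : 0 <= Cdist z w.
Proof. unfold Cdist; apply sqrt_pos. Qed.

Lemma Cdist_refl z : Cdist z z = 0.
Proof. unfold Cdist. replace ((fst z - fst z) ^ 2 + (snd z - snd z) ^ 2) with 0 by ring.
  apply sqrt_0. Qed.

Lemma Cdist_sym z w : Cdist z w = Cdist w z.
Proof. unfold Cdist. f_equal; ring. Qed.

Lemma Cdist_tri x y z : Cdist x z <= Cdist x y + Cdist y z.
Proof. rewrite !Cdist_mod.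
  replace (Complex.Cminus x z) with (Complex.Cplus (Complex.Cminus x y) (Complex.Cminus y z)).
  apply Complex.Cmod_triangle.
  destruct x, y, z; unfold Complex.Cminus, Complex.Cplus, Complex.Copp; simpl; f_equal; ring.
Qed.

Lemma Cdist_pos z w : z <> w -> 0 < Cdist z w.
Proof. intro H. destruct (Cdist_nonneg z w) as [H1|H1]; auto. exfalso; apply H.
  unfold Cdist in H1. symmetry in H1. apply sqrt_eq_0 in H1.
  2:{ apply Rplus_le_le_0_compat; apply pow2_ge_0. }
  destruct z as [a b], w as [a' b']; simpl in *.
  assert (E1 : (a - a')^2 = 0) by (pose proof (pow2_ge_0 (a-a')); pose proof (pow2_ge_0 (b-b')); lra).
  assert (E2 : (b - b')^2 = 0) by (pose proof (pow2_ge_0 (a-a')); pose proof (pow2_ge_0 (b-b')); lra).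
  assert (a - a' = 0) by (destruct (Req_dec (a-a') 0); auto; exfalso; eapply pow_nonzero; eauto).
  assert (b - b' = 0) by (destruct (Req_dec (b-b') 0); auto; exfalso; eapply pow_nonzero; eauto). f_equal; lra. Qed.

Definition nm (z : Cx) := Cdist z C0.

Lemma nm_mod z : nm z = Complex.Cmod z.
Proof. unfold nm, Cdist, Complex.Cmod; simpl. f_equal; ring. Qed.

Lemma nm_pow z n : nm (Cpow z n) = nm z ^ n.
Proof. induction n; simpl.
 - rewrite nm_mod. unfold Complex.Cmod; simpl. replace (1*(1*1)+0*(0*1)) with 1 by ring. apply sqrt_1.
 - rewrite <- IHn, !nm_mod. change (Cmul z (Cpow z n)) with (Complex.Cmult z (Cpow z n)).
   apply Complex.Cmod_mult. Qed.

Lemma Cdist_addc p q c : Cdist (Cadd p c) (Cadd q c) = Cdist p q.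
Proof. unfold Cdist, Cadd; simpl. f_equal; ring. Qed.

Lemma Cdist_fpoly_c d c z : Cdist (fpoly d c z) c = nm z ^ d.
Proof. rewrite <- nm_pow. unfold fpoly, nm, Cdist, Cadd, C0; simpl. f_equal; ring. Qed.

Lemma Cdist_le_nm z w : Cdist z w <= nm z + nm w.
Proof. unfold nm. rewrite (Cdist_sym w). apply Cdist_tri. Qed.

Lemma Cdist_mul a b a0 b0 :
  Cdist (Cmul a b) (Cmul a0 b0) <= nm a * Cdist b b0 + Cdist a a0 * nm b0.
Proof.
  rewrite !Cdist_mod, !nm_mod.
  replace (Complex.Cminus (Cmul a b) (Cmul a0 b0)) with
    (Complex.Cplus (Complex.Cmult a (Complex.Cminus b b0)) (Complex.Cmult (Complex.Cminus a a0) b0)).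
  eapply Rle_trans. apply Complex.Cmod_triangle. rewrite !Complex.Cmod_mult. lra.
  destruct a, b, a0, b0; unfold Cmul, Complex.Cmult, Complex.Cminus, Complex.Cplus, Complex.Copp; simpl; f_equal; ring.
Qed.

Definition cont (g : Cx -> Cx) := forall z e, 0 < e -> exists h, 0 < h /\
  forall w, Cdist w z < h -> Cdist (g w) (g z) < e.

Lemma cont_id : cont (fun w => w).
Proof. intros z e He; exists e; auto. Qed.

Lemma cont_const a : cont (fun _ => a).
Proof. intros z e He; exists 1; split; [lra|]; intros; rewrite Cdist_refl; auto. Qed.

Lemma cont_comp g1 g2 : cont g1 -> cont g2 -> cont (fun w => g1 (g2 w)).
Proof. intros H1 H2 z e He. destruct (H1 (g2 z) e He) as [h1 [Hh1 P1]].
  destruct (H2 z h1 Hh1) as [h2 [Hh2 P2]]. exists h2; split; auto. Qed.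

Lemma cont_mul g1 g2 : cont g1 -> cont g2 -> cont (fun w => Cmul (g1 w) (g2 w)).
Proof. intros H1 H2 z e He.
  set (A := nm (g1 z) + 1). set (B := nm (g2 z) + 1).
  assert (HA : 0 < A) by (unfold A, nm; pose proof (Cdist_nonneg (g1 z) C0); lra).
  assert (HB : 0 < B) by (unfold B, nm; pose proof (Cdist_nonneg (g2 z) C0); lra).
  destruct (H1 z (Rmin 1 (e / (2 * B)))) as [h1 [Hh1 P1]].
  { apply Rmin_pos; [lra|]. apply Rdiv_lt_0_compat; lra. }
  destruct (H2 z (e / (2 * A))) as [h2 [Hh2 P2]].
  { apply Rdiv_lt_0_compat; lra. }
  exists (Rmin h1 h2); split. apply Rmin_pos; auto.
  intros w Hw. pose proof (P1 w (Rlt_le_trans _ _ _ Hw (Rmin_l _ _))) as Q1.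
  pose proof (P2 w (Rlt_le_trans _ _ _ Hw (Rmin_r _ _))) as Q2.
  pose proof (Rmin_l 1 (e / (2 * B))). pose proof (Rmin_r 1 (e / (2 * B))).
  eapply Rle_lt_trans. apply Cdist_mul.
  assert (Ha : nm (g1 w) <= A).
  { unfold A, nm. pose proof (Cdist_tri (g1 w) (g1 z) C0). lra. }
  assert (Hb : nm (g2 z) <= B) by (unfold B; lra).
  assert (nm (g1 w) * Cdist (g2 w) (g2 z) <= A * (e / (2*A))).
  { apply Rmult_le_compat; auto. unfold nm; apply Cdist_nonneg. apply Cdist_nonneg. lra. }
  assert (Cdist (g1 w) (g1 z) * nm (g2 z) <= (e / (2*B)) * B).
  { apply Rmult_le_compat; auto. apply Cdist_nonneg. unfold nm; apply Cdist_nonneg. lra. }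
  assert (A * (e / (2*A)) = e/2) by (field; lra).
  assert ((e / (2*B)) * B = e/2) by (field; lra).
  assert (Cdist (g1 w) (g1 z) < e / (2 * B)) by lra.
  assert (H10 : Cdist (g1 w) (g1 z) * nm (g2 z) < e/2 \/ nm (g2 z) = 0).
  { destruct (Cdist_nonneg (g2 z) C0) as [Hp|Hp]; [left|right; auto].
    assert (Cdist (g1 w) (g1 z) * nm (g2 z) < (e / (2*B)) * B).
    { apply Rle_lt_trans with ((e / (2*B)) * nm (g2 z)).
      apply Rmult_le_compat_r; [unfold nm; lra| lra].
      apply Rmult_lt_compat_l. apply Rdiv_lt_0_compat; lra. unfold B; lra. }
    lra. }
  destruct H10 as [H10|H10].
  - assert (nm (g1 w) * Cdist (g2 w) (g2 z) <= e/2) by lra. lra.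
  - rewrite H10, Rmult_0_r.
    assert (nm (g1 w) * Cdist (g2 w) (g2 z) < e).
    { apply Rle_lt_trans with (A * Cdist (g2 w) (g2 z)).
      apply Rmult_le_compat_r; auto; apply Cdist_nonneg.
      apply Rlt_trans with (A * (e / (2*A))). apply Rmult_lt_compat_l; auto. lra. }
    lra.
Qed.

Lemma cont_addc g c : cont g -> cont (fun w => Cadd (g w) c).
Proof. intros H z e He. destruct (H z e He) as [h [Hh P]]. exists h; split; auto.
  intros w Hw. rewrite Cdist_addc. auto. Qed.

Lemma cont_pow n : cont (fun z => Cpow z n).
Proof. induction n; simpl. apply cont_const. apply cont_mul; auto. apply cont_id. Qed.

Lemma cont_fpoly d c : cont (fpoly d c).
Proof. unfold fpoly. apply cont_addc, cont_pow. Qed.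

Lemma cont_iter d c n : cont (iter n (fpoly d c)).
Proof. induction n; simpl. apply cont_id.
  apply (cont_comp (fpoly d c) (iter n (fpoly d c))); auto. apply cont_fpoly. Qed.

Lemma open_ball a r : Defs.open_set (ball a r).
Proof. intros z Hz. unfold ball in *. exists (r - Cdist z a); split. lra.
  intros w Hw. pose proof (Cdist_tri w z a). lra. Qed.

Lemma open_preimage g V : cont g -> Defs.open_set V -> Defs.open_set (preimage g V).
Proof. intros Hg HV z Hz. unfold preimage in *. destruct (HV _ Hz) as [e [He P]].
  destruct (Hg z e He) as [h [Hh Q]]. exists h; split; auto. Qed.

Lemma conn_side S U V x : connected S -> Defs.open_set U -> Defs.open_set V ->
  (forall z, S z -> U z \/ V z) -> (forall z, S z -> U z -> V z -> False) ->
  S x -> U x -> forall z, S z -> U z.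
Proof. intros HS HU HV Hcov Hdis Hx HUx z Hz. apply NNPP; intro HnU.
  apply HS. exists U, V. repeat split; auto. exists x; auto.
  exists z; split; auto. destruct (Hcov z Hz); tauto. Qed.

Lemma conn_union S1 S2 x : connected S1 -> connected S2 -> S1 x -> S2 x ->
  connected (fun z => S1 z \/ S2 z).
Proof. intros H1 H2 Hx1 Hx2 [U [V [HU [HV [Hcov [[u [Su Uu]] [[v [Sv Vv]] Hdis]]]]]]].
  assert (Hc1 : forall z, S1 z -> U z \/ V z) by (intros; apply Hcov; auto).
  assert (Hc2 : forall z, S2 z -> U z \/ V z) by (intros; apply Hcov; auto).
  assert (Hd1 : forall z, S1 z -> U z -> V z -> False) by (intros z0 Hz0 Ha0 Hb0; apply (Hdis z0); auto).
  assert (Hd2 : forall z, S2 z -> U z -> V z -> False) by (intros z0 Hz0 Ha0 Hb0; apply (Hdis z0); auto).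
  destruct (Hc1 x Hx1) as [Ux|Vx].
  - pose proof (conn_side S1 U V x H1 HU HV Hc1 Hd1 Hx1 Ux) as A1.
    pose proof (conn_side S2 U V x H2 HU HV Hc2 Hd2 Hx2 Ux) as A2.
    destruct Sv as [Sv|Sv]; [eapply Hd1; eauto | eapply Hd2; eauto].
  - assert (Hc1' : forall z, S1 z -> V z \/ U z) by (intros z Hz; destruct (Hc1 z Hz); auto).
    assert (Hc2' : forall z, S2 z -> V z \/ U z) by (intros z Hz; destruct (Hc2 z Hz); auto).
    assert (Hd1' : forall z, S1 z -> V z -> U z -> False) by (intros z0 Hz0 Ha0 Hb0; apply (Hdis z0); auto).
    assert (Hd2' : forall z, S2 z -> V z -> U z -> False) by (intros z0 Hz0 Ha0 Hb0; apply (Hdis z0); auto).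
    pose proof (conn_side S1 V U x H1 HV HU Hc1' Hd1' Hx1 Vx) as A1.
    pose proof (conn_side S2 V U x H2 HV HU Hc2' Hd2' Hx2 Vx) as A2.
    destruct Su as [Su|Su]; [eapply Hd1; eauto | eapply Hd2; eauto].
Qed.

Lemma conn_image g S : cont g -> connected S ->
  connected (fun y => exists x, S x /\ y = g x).
Proof. intros Hg HS [U [V [HU [HV [Hcov [[u [[xu [Su Eu]] Uu]] [[v [[xv [Sv Ev]] Vv]] Hdis]]]]]]].
  apply HS. exists (preimage g U), (preimage g V). unfold preimage.
  repeat split. apply open_preimage; auto. apply open_preimage; auto.
  intros z Hz. apply Hcov. eauto.
  exists xu; subst; auto. exists xv; subst; auto.
  intros z Hz. apply Hdis. eauto.
Qed.

Lemma comp_sub A x z : component A x z -> A z.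
Proof. intros [S [_ [HS [_ Hz]]]]. auto. Qed.

Lemma comp_mono (A B : Cx -> Prop) x z : (forall w, A w -> B w) -> component A x z -> component B x z.
Proof. intros H [S [HS [HA [Hx Hz]]]]. exists S; repeat split; auto. Qed.

Lemma comp_join A x y z : component A x y -> component A x z -> component A y z.
Proof. intros [S1 [C1 [A1 [X1 Y1]]]] [S2 [C2 [A2 [X2 Z2]]]].
  exists (fun w => S1 w \/ S2 w). repeat split.
  apply (conn_union S1 S2 x); auto. intros w [H|H]; auto. auto. auto. Qed.

Lemma conn_single x : connected (fun z => z = x).
Proof. intros [U [V [_ [_ [_ [[u [Su Uu]] [[v [Sv Vv]] Hdis]]]]]]]. subst.
  eapply Hdis; eauto. Qed.

Lemma comp_refl (A : Cx -> Prop) x : A x -> component A x x.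
Proof. intros. exists (fun z => z = x). repeat split; auto. apply conn_single.
  intros; subst; auto. Qed.

Definition pt (a : Cx) (t : R) : Cx := (fst a + t, snd a).

Lemma Cdist_pt a t s : Cdist (pt a t) (pt a s) = Rabs (t - s).
Proof. unfold Cdist, pt; simpl.
  replace ((fst a + t - (fst a + s)) * ((fst a + t - (fst a + s)) * 1) +
   (snd a - snd a) * ((snd a - snd a) * 1)) with ((t - s) * (t - s)) by ring.
  apply sqrt_Rsqr_abs. Qed.

Definition seg (a : Cx) (h : R) : Cx -> Prop := fun z => exists t, 0 <= t <= h /\ z = pt a t.

Lemma seg_half a h U V : Defs.open_set U -> Defs.open_set V ->
  (forall z, seg a h z -> U z \/ V z) -> (forall z, seg a h z -> U z -> V z -> False) ->
  0 <= h -> U (pt a 0) -> (exists t, 0 <= t <= h /\ V (pt a t)) -> False.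
Proof.
  intros HU HV Hcov Hdis Hh U0 [t0 [Ht0 Vt0]].
  set (E := fun s => 0 <= s <= h /\ forall t, 0 <= t <= s -> U (pt a t)).
  assert (HE0 : E 0). { split. lra. intros t Ht. replace t with 0 by lra. auto. }
  assert (Hb : bound E). { exists h. intros s [Hs _]. lra. }
  destruct (completeness E Hb (ex_intro _ 0 HE0)) as [s [Hub Hlub]].
  assert (Hs0 : 0 <= s) by (apply Hub; auto).
  assert (Hsh : s <= h) by (apply Hlub; intros x [Hx _]; lra).
  assert (Hbelow : forall t, 0 <= t < s -> U (pt a t)).
  { intros t Ht. apply NNPP; intro Hn.
    assert (s <= t). { apply Hlub. intros x [Hx Hx2]. apply Rnot_lt_le. intro Hlt.
      apply Hn. apply Hx2. lra. } lra. }
  assert (Hseg : forall t, 0 <= t <= h -> seg a h (pt a t)) by (intros t Ht; exists t; auto).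
  destruct (Hcov (pt a s) (Hseg s (conj Hs0 Hsh))) as [Us|Vs].
  - destruct (HU _ Us) as [e [He Pe]].
    set (s' := Rmin h (s + e/2)).
    assert (Es' : E s').
    { split. unfold s'; split; [apply Rmin_glb; lra|apply Rmin_l].
      intros t Ht. destruct (Rlt_le_dec t s). apply Hbelow; lra.
      apply Pe. rewrite Cdist_pt. pose proof (Rmin_r h (s + e/2)). unfold s' in Ht.
      rewrite Rabs_right; lra. }
    assert (s' <= s) by (apply Hub; auto).
    assert (s' = h). { unfold s' in *. unfold Rmin in *. destruct (Rle_dec h (s + e/2)); lra. }
    assert (Ut0 : U (pt a t0)).
    { destruct (Rlt_le_dec t0 s). apply Hbelow; lra. replace t0 with s by lra. auto. }
    eapply Hdis; eauto.
  - destruct (Rle_lt_dec s 0).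
    + replace s with 0 in Vs by lra. eapply (Hdis (pt a 0)); eauto. apply Hseg; lra.
    + destruct (HV _ Vs) as [e [He Pe]].
      set (t := Rmax 0 (s - e/2)).
      assert (Ht : 0 <= t < s).
      { unfold t. split. apply Rmax_l. apply Rmax_lub_lt; lra. }
      apply (Hdis (pt a t)). apply Hseg; lra. apply Hbelow; auto.
      apply Pe. rewrite Cdist_pt. rewrite Rabs_left by lra.
      pose proof (Rmax_r 0 (s - e/2)). unfold t in *. lra.
Qed.

Lemma seg_conn a h : 0 <= h -> connected (seg a h).
Proof. intros Hh [U [V [HU [HV [Hcov [[u [Su Uu]] [[v [Sv Vv]] Hdis]]]]]]].
  assert (S0 : seg a h (pt a 0)) by (exists 0; split; [lra|auto]).
  destruct (Hcov _ S0) as [U0|V0].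
  - destruct Sv as [t [Ht Et]]. subst v.
    eapply (seg_half a h U V); eauto.
  - destruct Su as [t [Ht Et]]. subst u.
    eapply (seg_half a h V U); eauto.
    intros z Hz; destruct (Hcov z Hz); auto.
Qed.

Definition bnd (S : Cx -> Prop) := exists M, forall z, S z -> nm z <= M.

Lemma bnd_sub (S T : Cx -> Prop) : (forall z, S z -> T z) -> bnd T -> bnd S.
Proof. intros H [M HM]; exists M; auto. Qed.

Lemma pow_ge_self x n : 1 <= x -> (1 <= n)%nat -> x <= x ^ n.
Proof. intros. rewrite <- (pow_1 x) at 1. apply Rle_pow; auto. Qed.

Lemma bnd_pre d c V : (1 <= d)%nat -> bnd V -> bnd (preimage (fpoly d c) V).
Proof. intros Hd [M HM]. exists (Rmax 1 (M + nm c)). intros z Hz. unfold preimage in Hz.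
  pose proof (HM _ Hz) as H1.
  assert (nm z ^ d <= M + nm c).
  { rewrite <- (Cdist_fpoly_c d c z). pose proof (Cdist_tri (fpoly d c z) C0 c).
    unfold nm in *. rewrite (Cdist_sym C0 c) in H. lra. }
  destruct (Rle_lt_dec (nm z) 1). apply Rle_trans with 1; auto; apply Rmax_l.
  apply Rle_trans with (M + nm c); [|apply Rmax_r].
  apply Rle_trans with (nm z ^ d); auto. apply pow_ge_self; auto; lra.
Qed.

Lemma bnd_ball r : bnd (ball C0 r).
Proof. exists r. intros z Hz. unfold ball, nm in *. lra. Qed.

Lemma bnd_pre_iter d c n V : (1 <= d)%nat -> bnd V -> bnd (preimage (iter n (fpoly d c)) V).
Proof. intros Hd. revert V. induction n; intros V HV.
  - apply (bnd_sub _ V); auto.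
  - apply (bnd_sub _ (preimage (iter n (fpoly d c)) (preimage (fpoly d c) V))).
    intros z Hz; exact Hz. apply IHn. apply bnd_pre; auto. Qed.

Definition dset (U : Cx -> Prop) := fun r => exists z w, U z /\ U w /\ r = Cdist z w.

Lemma diam_spec U z0 : bnd U -> U z0 -> is_lub (dset U) (diam U).
Proof. intros [M HM] Hz0. unfold diam.
  apply epsilon_spec.
  assert (Hb : bound (dset U)).
  { exists (2 * M). intros r [z [w [Hz [Hw Er]]]]. subst r.
    pose proof (Cdist_le_nm z w). pose proof (HM z Hz). pose proof (HM w Hw). unfold bnd in *. lra. }
  assert (Hn : exists x, dset U x) by (exists (Cdist z0 z0); exists z0, z0; auto).
  destruct (completeness _ Hb Hn) as [m Hm]. exists m; exact Hm.
Qed.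

Lemma diam_ge U z w : bnd U -> U z -> U w -> Cdist z w <= diam U.
Proof. intros HB Hz Hw. destruct (diam_spec U z HB Hz) as [H _]. apply H. exists z, w; auto. Qed.

Lemma diam_mono (U W : Cx -> Prop) z0 : (forall z, U z -> W z) -> bnd W -> U z0 -> diam U <= diam W.
Proof. intros HUW HB Hz0. assert (HBU : bnd U) by (eapply bnd_sub; eauto).
  destruct (diam_spec U z0 HBU Hz0) as [_ H]. apply H.
  intros r [z [w [Hz [Hw Er]]]]. subst. apply diam_ge; auto. Qed.

Lemma glb_exists (S : R -> Prop) x0 b : S x0 -> (forall x, S x -> b <= x) -> exists m, is_glb S m.
Proof. intros H0 Hb.
  assert (Hbd : bound (fun y => S (- y))).
  { exists (- b). intros y Hy. pose proof (Hb _ Hy). lra. }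
  assert (Hne : exists y, S (- y)) by (exists (- x0); rewrite Ropp_involutive; auto).
  destruct (completeness _ Hbd Hne) as [m [Hub Hlub]].
  exists (- m). split.
  - intros x Hx. assert (- x <= m) by (apply Hub; rewrite Ropp_involutive; auto). lra.
  - intros b' Hb'. assert (m <= - b'). { apply Hlub. intros y Hy. pose proof (Hb' _ Hy). lra. } lra.
Qed.

Lemma glb_spec (S : R -> Prop) x0 b : S x0 -> (forall x, S x -> b <= x) ->
  is_glb S (epsilon (inhabits 0) (is_glb S)).
Proof. intros. apply epsilon_spec. eapply glb_exists; eauto. Qed.

Lemma dist_to_le U a z : U z -> dist_to U a <= Cdist z a.
Proof. intros Hz. unfold dist_to.
  assert (Hs : is_glb (fun r => exists z, U z /\ r = Cdist z a)
     (epsilon (inhabits 0) (is_glb (fun r => exists z, U z /\ r = Cdist z a)))).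
  { apply (glb_spec _ (Cdist z a) 0). exists z; auto.
    intros x [w [_ E]]; subst; apply Cdist_nonneg. }
  destruct Hs as [H _]. apply H. exists z; auto. Qed.

Lemma root_pow (x : R) d : 0 < x -> (1 <= d)%nat -> Rpower x (/ INR d) ^ d = x.
Proof. intros Hx Hd. rewrite <- Rpower_pow. rewrite Rpower_mult.
  rewrite Rinv_l. apply Rpower_1; auto. apply not_0_INR; lia.
  unfold Rpower; apply exp_pos. Qed.

Lemma pow_lt_mono a b n : 0 <= a < b -> (1 <= n)%nat -> a ^ n < b ^ n.
Proof. intros H Hn. induction n. lia. destruct n. simpl; lra.
  simpl in *. assert (a * (a * a ^ n) <= b * (a * a^n)).
  { apply Rmult_le_compat_r. apply Rmult_le_pos; [lra|apply pow_le; lra]. lra. }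
  assert (b * (a * a^n) < b * (b * b^n)). { apply Rmult_lt_compat_l. lra. apply IHn; lia. }
  lra. Qed.

Lemma ball_tilde_iff d delta z : (1 <= d)%nat -> 0 < delta ->
  (Btilde d delta z <-> nm z ^ d < delta).
Proof. intros Hd Hdel. unfold Btilde, ball. fold (nm z).
  assert (Hp : 0 < Rpower delta (/ INR d)) by (unfold Rpower; apply exp_pos).
  pose proof (root_pow delta d Hdel Hd).
  assert (0 <= nm z) by apply Cdist_nonneg.
  split; intro H1.
  - rewrite <- H. apply pow_lt_mono; auto; lra.
  - apply Rnot_le_lt. intro H2. assert (Rpower delta (/ INR d) ^ d <= nm z ^ d).
    apply pow_incr; lra. lra. Qed.

Lemma ball_tilde_mono d a b z : (1 <= d)%nat -> 0 < a <= b -> Btilde d a z -> Btilde d b z.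
Proof. intros Hd Hab H. apply (ball_tilde_iff d a z Hd) in H; [|lra]. apply (ball_tilde_iff d b z Hd); lra. Qed.

Lemma iter_shift n g z : iter n g (g z) = iter (S n) g z.
Proof. induction n; simpl; auto. simpl in IHn. rewrite IHn. auto. Qed.

Lemma iter_add a b g z : iter (a + b) g z = iter a g (iter b g z).
Proof. induction a; simpl; auto. rewrite IHa; auto. Qed.

Lemma fpoly_0 d c : (1 <= d)%nat -> fpoly d c C0 = c.
Proof. intros Hd. destruct d. lia. unfold fpoly; simpl.
  unfold Cmul, Cadd, C0; simpl. destruct c; simpl. f_equal; ring. Qed.

Lemma comp_trans A x y z : component A x y -> component A y z -> component A x z.
Proof. intros [S1 [C1 [A1 [X1 Y1]]]] [S2 [C2 [A2 [X2 Z2]]]].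
  exists (fun w => S1 w \/ S2 w). repeat split.
  apply (conn_union S1 S2 y); auto. intros w [H|H]; auto. auto. auto. Qed.

Lemma pt0 a : pt a 0 = a.
Proof. destruct a; unfold pt; simpl; f_equal; ring. Qed.

Lemma Cdist_pt_a a t : Cdist (pt a t) a = Rabs t.
Proof. rewrite <- (pt0 a) at 2. rewrite Cdist_pt. f_equal; ring. Qed.

Lemma iterN d c N : (1 <= d)%nat -> (1 <= N)%nat ->
  iter (N - 1) (fpoly d c) c = iter N (fpoly d c) C0.
Proof. intros Hd HN. transitivity (iter (N - 1) (fpoly d c) (fpoly d c C0)). rewrite fpoly_0; auto. rewrite iter_shift.
  f_equal. lia. Qed.

Lemma iterS_eq n g z : iter (S n) g z = g (iter n g z).
Proof. reflexivity. Qed.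

Lemma core d c (Hd : (1 <= d)%nat) delta r N n Sx
  (Hdel : 0 < delta) (Hr1 : 1 < r)
  (Hadm : r_adm d c delta r)
  (HN1 : (1 <= N)%nat) (HNb : Btilde d delta (iter N (fpoly d c) C0))
  (HnN : (N <= Datatypes.S n)%nat)
  (HS : connected Sx)
  (HSP : forall t, Sx t -> Btilde d delta (iter n (fpoly d c) t))
  (HSc : Sx c) :
  forall t, Sx t -> Btilde d (2 * delta) (iter (N - 1) (fpoly d c) t).
Proof.
  set (f := fpoly d c). intros t Ht.
  destruct (Nat.eq_dec n (N - 1)) as [En|En].
  - subst n. eapply ball_tilde_mono; eauto. lra.
  - set (m1 := (n - N)%nat).
    assert (Hn : n = (m1 + N)%nat) by (unfold m1; lia).
    set (T1 := fun y => exists x, Sx x /\ y = iter N f x).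
    assert (HT1 : connected T1) by (apply conn_image; auto; apply cont_iter).
    set (P1 := preimage (iter m1 f) (Btilde d (delta * r))).
    assert (HT1P : forall y, T1 y -> P1 y).
    { intros y [x [Hx Ey]]. subst y. unfold P1, preimage. rewrite <- iter_add, <- Hn.
      eapply ball_tilde_mono; [auto| |apply HSP; auto]. nra. }
    set (y0 := iter N f c).
    assert (Ty0 : T1 y0) by (exists c; auto).
    set (W1 := component P1 y0).
    assert (Hpb : pullback d c (Btilde d (delta * r)) m1 W1).
    { exists y0. split. apply HT1P; auto. intro z; tauto. }
    assert (Hw : iter (N - 1) f c = iter N f C0) by (apply iterN; auto).
    assert (Hy0c : Cdist y0 c < delta).
    { unfold y0. replace N with (Datatypes.S (N - 1)) at 1 by lia. rewrite iterS_eq, Hw.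
      unfold f. rewrite Cdist_fpoly_c. apply ball_tilde_iff; auto. }
    assert (Hdist : dist_to W1 c <= delta).
    { apply Rle_trans with (Cdist y0 c). apply dist_to_le. apply comp_refl. apply HT1P; auto. lra. }
    destruct Hadm as [_ Hadm]. pose proof (Hadm m1 W1 Hpb Hdist) as Hdiam.
    assert (HW1b : bnd W1).
    { apply (bnd_sub _ P1). intros z Hz; eapply comp_sub; eauto.
      apply bnd_pre_iter; auto. apply bnd_ball. }
    assert (Hyt : W1 (iter N f t)).
    { exists T1. repeat split; auto. exists t; auto. }
    assert (Hge : Cdist (iter N f t) y0 <= diam W1).
    { apply diam_ge; auto. apply comp_refl. apply HT1P; auto. }
    pose proof (Cdist_tri (iter N f t) y0 c).
    assert (Hlt : Cdist (iter N f t) c < 2 * delta) by lra.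
    replace N with (Datatypes.S (N - 1)) in Hlt by lia. rewrite iterS_eq in Hlt.
    unfold f in Hlt. rewrite Cdist_fpoly_c in Hlt.
    apply ball_tilde_iff; auto. lra.
Qed.

Theorem lemma4p3 (d : nat) (c : Cx)
  (Hd : (2 <= d)%nat)
  (Hnonper : forall n, (1 <= n)%nat -> iter n (fpoly d c) C0 <> C0)
  (Hrec : forall eps, 0 < eps -> forall N, exists n, (N <= n)%nat /\
            Cdist (iter n (fpoly d c) C0) C0 < eps)
  (Hbc : backward_contracting d c) :
  exists delta0, 0 < delta0 /\
    forall delta, 0 < delta < delta0 ->
    forall N, is_n_delta d c delta N ->
      Rdelta d c delta >=
        delta / diam (component (preimage (iter (N - 1) (fpoly d c))
                                          (Btilde d (2 * delta))) c).
Proof.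
  assert (Hd1 : (1 <= d)%nat) by lia.
  destruct (Hbc 1) as [delta0 [Hd0 Hr]]. exists delta0. split; auto.
  intros delta Hdel N [HN1 [HNb HNmin]].
  destruct (Hr delta Hdel) as [r [Hadm Hr1]].
  assert (Hdp : 0 < delta) by lra.
  set (f := fpoly d c).
  set (Q := preimage (iter (N - 1) f) (Btilde d (2 * delta))).
  set (W := component Q c).
  assert (Hw : iter (N - 1) f c = iter N f C0) by (apply iterN; auto).
  assert (HQc : Q c).
  { unfold Q, preimage. rewrite Hw. eapply ball_tilde_mono; eauto. lra. }
  assert (HWb : bnd W).
  { apply (bnd_sub _ Q). intros z Hz; eapply comp_sub; eauto.
    apply bnd_pre_iter; auto. apply bnd_ball. }
  assert (HWc : W c) by (apply comp_refl; auto).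
  assert (K : forall n U, pullback d c (Btilde d delta) n U -> U c ->
     (forall z, U z -> W z) /\ 0 < diam U /\ bnd U).
  { intros n U [x [Px HU]] HUc.
    set (P := preimage (iter n f) (Btilde d delta)).
    assert (HxC : component P x c) by (apply HU; auto).
    assert (HPc : P c) by (eapply comp_sub; eauto).
    assert (HnN : (N <= S n)%nat).
    { destruct (Nat.le_gt_cases N (S n)); auto. exfalso.
      apply (HNmin (S n)). lia. unfold P, preimage in HPc.
      rewrite <- iter_shift. unfold f. rewrite fpoly_0; auto. }
    assert (HUb : bnd U).
    { apply (bnd_sub _ P). intros z Hz; eapply comp_sub; apply HU; eauto.
      apply bnd_pre_iter; auto. apply bnd_ball. }
    split; [|split; auto].
    - intros z Hz. apply HU in Hz.
      destruct (comp_join P x c z HxC Hz) as [Sx [HSc [HSP [HS1 HS2]]]].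
      exists Sx. repeat split; auto.
      intros t Ht. unfold Q, preimage.
      eapply (core d c Hd1 delta r N n Sx); eauto.
    - assert (HPo : Defs.open_set P).
      { apply open_preimage. apply cont_iter. apply open_ball. }
      destruct (HPo c HPc) as [e [He Pe]].
      set (c' := pt c (e / 2)).
      assert (Hseg : component P c c').
      { exists (seg c (e / 2)). repeat split.
        apply seg_conn; lra.
        intros w [t [Ht Ew]]. subst w. apply Pe. rewrite Cdist_pt_a.
        rewrite Rabs_right; lra.
        exists 0. split. lra. symmetry; apply pt0.
        exists (e / 2). split. lra. auto. }
      assert (HUc' : U c') by (apply HU; eapply comp_trans; eauto).
      apply Rlt_le_trans with (Cdist c' c).
      unfold c'. rewrite Cdist_pt_a. rewrite Rabs_right; lra.
      apply diam_ge; auto. }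
  set (Sset := fun x => exists n U, pullback d c (Btilde d delta) n U /\ U c
                                  /\ x = delta / diam U).
  set (U0 := component (preimage (iter (N - 1) f) (Btilde d delta)) c).
  assert (HU0 : pullback d c (Btilde d delta) (N - 1) U0).
  { exists c. split. unfold preimage. fold f. rewrite Hw. auto. intro z; tauto. }
  assert (HU0c : U0 c).
  { apply comp_refl. unfold preimage. fold f. rewrite Hw. auto. }
  assert (Hlow : forall x, Sset x -> delta / diam W <= x).
  { intros x [n [U [Hpb [HUc Ex]]]]. subst x.
    destruct (K n U Hpb HUc) as [Hsub [Hpos HUb]].
    assert (diam U <= diam W) by (apply (diam_mono U W c); auto).
    unfold Rdiv. apply Rmult_le_compat_l. lra.
    apply Rinv_le_contravar; auto. }
  assert (Hglb := glb_spec Sset (delta / diam U0) (delta / diam W)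
                    (ex_intro _ (N - 1)%nat (ex_intro _ U0 (conj HU0 (conj HU0c eq_refl)))) Hlow).
  destruct Hglb as [_ Hg]. apply Rle_ge. apply Hg. exact Hlow.
Qed.
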